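(* Let $\mathsf{P}=\mathrm{conv}(v_0,\dots,v_r)\subseteq\mathbb{Q}^2$ be a $\mathbb{Q}$-Gorenstein polytope of index $\imath\ge2$. If $\mathsf{P}$ contains two distinct lattice points different from the origin, then $\mathsf{P}$ is not canonical.
   Context: Let $d\ge2$, $r\ge d$ and $v_0:=0,v_1,\dots,v_r\in\mathbb{Q}^d$ pairwise different such that $\mathsf{P}=\mathrm{conv}(v_0,\dots,v_r)$ is full-dimensional with vertex set $\{v_0,\dots,v_r\}$. $\mathsf{P}$ is $\mathbb{Q}$-Gorenstein of index $\imath\in\mathbb{Z}_{\ge1}$ if there exist $\alpha_1,\dots,\alpha_d\in\mathbb{Z}$ with $\sum_{j}\alpha_jv_{ij}=\imath$ for all $i=1,\dots,r$ and $\imath$ is minimal with this property. Such $\mathsf{P}$ is canonical if for every lattice point $0\ne p\in\mathsf{P}$ we have $\sum_j\alpha_jp_j=\imath$. *)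

(* Defs.v *)
From HB Require Import structures.
From mathcomp Require Import all_boot all_order all_algebra.
Set Implicit Arguments. Unset Strict Implicit. Unset Printing Implicit Defensive.
Import Order.TTheory GRing.Theory Num.Theory.
Local Open Scope ring_scope.

Definition pairing (d : nat) (alpha : 'rV[int]_d) (x : 'rV[rat]_d) : rat :=
  \sum_(j < d) (alpha 0 j)%:~R * x 0 j.

Definition in_conv (d r : nat) (v : 'I_r.+1 -> 'rV[rat]_d) (x : 'rV[rat]_d) : Prop :=
  exists lam : 'I_r.+1 -> rat,
    (forall i, 0 <= lam i) /\ \sum_i lam i = 1 /\ x = \sum_i lam i *: v i.

Definition is_vertex (d r : nat) (v : 'I_r.+1 -> 'rV[rat]_d) (i : 'I_r.+1) : Prop :=
  ~ exists lam : 'I_r.+1 -> rat,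
      (forall j, 0 <= lam j) /\ lam i = 0 /\ \sum_j lam j = 1 /\
      v i = \sum_j lam j *: v j.

(* conv(v_0,...,v_r) with v_0 = 0 is full-dimensional: its affine hull,
   i.e. the linear span of v_1 - v_0, ..., v_r - v_0 = v_1,...,v_r, is Q^d. *)
Definition full_dim (d r : nat) (v : 'I_r.+1 -> 'rV[rat]_d) : Prop :=
  \rank (\matrix_(i < r.+1) (v i - v ord0)) = d.

Definition good_polytope (d r : nat) (v : 'I_r.+1 -> 'rV[rat]_d) : Prop :=
  (d <= r)%N /\ v ord0 = 0 /\ injective v /\ full_dim v /\ (forall i, is_vertex v i).

Definition gor_witness (d r : nat) (v : 'I_r.+1 -> 'rV[rat]_d)
    (ii : nat) (alpha : 'rV[int]_d) : Prop :=
  forall i : 'I_r.+1, i != ord0 -> pairing alpha (v i) = ii%:R.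

Definition QGorenstein_index (d r : nat) (v : 'I_r.+1 -> 'rV[rat]_d) (ii : nat) : Prop :=
  (0 < ii)%N /\ (exists alpha, gor_witness v ii alpha) /\
  (forall j : nat, (0 < j)%N -> (exists alpha, gor_witness v j alpha) -> (ii <= j)%N).

Definition lattice_point (d : nat) (p : 'rV[rat]_d) : Prop :=
  forall j : 'I_d, p 0 j \is a Num.int.

Definition canonical (d r : nat) (v : 'I_r.+1 -> 'rV[rat]_d) (ii : nat) : Prop :=
  exists alpha, gor_witness v ii alpha /\
    forall p : 'rV[rat]_d, lattice_point p -> in_conv v p -> p != 0 ->
      pairing alpha p = ii%:R.

(* Main.v *)
Require Import Defs.
From HB Require Import structures.
From mathcomp Require Import all_boot all_order all_algebra.
From mathcomp Require Import ring lra zify.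
Import Order.TTheory GRing.Theory Num.Theory.
Local Open Scope ring_scope.

Lemma pairing2 (al : 'rV[int]_2) (z : 'rV[rat]_2) :
  pairing al z = (al 0 0)%:~R * z 0 0 + (al 0 1)%:~R * z 0 1.
Proof.
rewrite /pairing big_ord_recr big_ord_recr big_ord0 /= add0r.
have e0 : widen_ord (leqnSn 1) (ord_max : 'I_1) = 0 :> 'I_2 by apply/val_inj.
have e1 : (ord_max : 'I_2) = 1 by apply/val_inj.
by rewrite e0 e1.
Qed.

Lemma in_conv_comb (r : nat) (v : 'I_r.+1 -> 'rV[rat]_2) p q (a b : rat) :
  v ord0 = 0 -> in_conv v p -> in_conv v q -> 0 <= a -> 0 <= b -> a + b <= 1 ->
  in_conv v (a *: p + b *: q).
Proof.
move=> v0 [mu [mu0 [mu1 ->]]] [nu [nu0 [nu1 ->]]] a0 b0 ab.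
exists (fun i => a * mu i + b * nu i + (if i == ord0 then 1 - a - b else 0)).
split; [|split].
- move=> i; apply: addr_ge0; first by apply: addr_ge0; apply: mulr_ge0.
  by case: eqP => // _; lra.
- rewrite big_split /= big_split /= -!mulr_sumr mu1 nu1.
  rewrite (bigD1 ord0) //= ?eqxx big1 => [|i /negbTE -> //]; ring.
- symmetry; under eq_bigr do rewrite !scalerDl.
  rewrite big_split /= big_split /=.
  have -> : \sum_(i < r.+1) (if i == ord0 then 1 - a - b else 0) *: v i = 0.
    rewrite (bigD1 ord0) //= v0 scaler0 add0r big1 // => i /negbTE ->.
    by rewrite scale0r.
  rewrite addr0 !scaler_sumr; congr (_ + _); apply: eq_bigr => i _; by rewrite scalerA.
Qed.


Lemma lat2 (p : 'rV[rat]_2) : lattice_point p ->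
  exists p1 p2 : int, p 0 0 = p1%:~R /\ p 0 1 = p2%:~R.
Proof.
move=> lp; have /intrP [p1 e1] := lp 0; have /intrP [p2 e2] := lp 1.
by exists p1, p2.
Qed.
Lemma ident1 (n x s t k al P1 Q1 : int) : k != 0 -> n != 0 ->
  P1 = n * x - (n * s+t) * al -> Q1 = P1 - k * al ->
  ((n-1) * k - t)%:~R / (n * k)%:~R  *  (P1%:~R : rat) + t%:~R / (n * k)%:~R  *  Q1%:~R
  = ((n-1) * x - ((n-1) * s+t) * al)%:~R.
Proof.
move=> k0 n0 -> ->.
have k0' : (k%:~R : rat) != 0 by rewrite intr_eq0.
have n0' : (n%:~R : rat) != 0 by rewrite intr_eq0.
rewrite !(rmorphB, rmorphD, rmorphM, rmorph1) /=.
by field; rewrite k0' n0'.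
Qed.

Lemma key_pos (al1 al2 x y p1 p2 q1 q2 n : int) : al1 * x+al2 * y = 1 ->
  al1 * p1+al2 * p2 = n -> al1 * q1+al2 * q2 = n -> 2 <= n ->
  0 < (q2-p2) * x - (q1-p1) * y ->
  exists lp lq : rat, [/\ 0 <= lp, 0 <= lq, lp + lq = (n-1)%:~R/n%:~R,
    exists z1 : int, lp * p1%:~R + lq * q1%:~R = z1%:~R &
    exists z2 : int, lp * p2%:~R + lq * q2%:~R = z2%:~R].
Proof.
move=> H1 Hp Hq n2 kpos.
set k := (q2-p2) * x - (q1-p1) * y.
set a := p2 * x - p1 * y.
have n0 : n != 0 by lia.
have k0 : k != 0 by rewrite gt_eqF.
have hP1 : p1 = n * x - a * al2.
  apply/eqP; rewrite -subr_eq0; apply/eqP.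
  transitivity (0 - p1 * (al1 * x+al2 * y-1)).
    by rewrite -Hp /a; ring.
  by rewrite H1 subrr mulr0 subrr.
have hQ1 : q1 = p1 - k * al2.
  apply/eqP; rewrite -subr_eq0; apply/eqP.
  transitivity (x * ((al1 * q1+al2 * q2) - (al1 * p1+al2 * p2)) - (q1-p1) * (al1 * x+al2 * y-1)).
    by rewrite /k; ring.
  by rewrite H1 Hp Hq !subrr !mulr0 subr0.
have hP2 : p2 = n * y - a * (-al1).
  apply/eqP; rewrite -subr_eq0; apply/eqP.
  transitivity (0 - p2 * (al1 * x+al2 * y-1)).
    by rewrite -Hp /a; ring.
  by rewrite H1 subrr mulr0 subrr.
have hQ2 : q2 = p2 - k * (-al1).
  apply/eqP; rewrite -subr_eq0; apply/eqP.
  transitivity (y * ((al1 * q1+al2 * q2) - (al1 * p1+al2 * p2)) - (q2-p2) * (al1 * x+al2 * y-1)).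
    by rewrite /k; ring.
  by rewrite H1 Hp Hq !subrr !mulr0 subr0.
have ha := divz_eq a n.
set s := (a %/ n)%Z in ha; set t := (a %% n)%Z in ha.
have t0 : 0 <= t by apply: modz_ge0.
have tn : t < n by apply: ltz_pmod; lia.
exists (((n-1) * k - t)%:~R / (n * k)%:~R), (t%:~R / (n * k)%:~R); split.
- have hk : n - 1 <= (n-1) * k.
    by rewrite -[X in X <= _]mulr1; apply: ler_wpM2l; lia.
  apply: divr_ge0; rewrite ler0z; last by apply: mulr_ge0; lia.
  clear -hk tn; lia.
- apply: divr_ge0; rewrite ler0z //; by apply: mulr_ge0; lia.
- have k0' : (k%:~R : rat) != 0 by rewrite intr_eq0.
  have n0' : (n%:~R : rat) != 0 by rewrite intr_eq0.
  rewrite -mulrDl rmorphM /= !(rmorphB, rmorphD, rmorphM, rmorph1) /=.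
  by field; rewrite n0' /=; move: k0'; rewrite /k !(rmorphB, rmorphM) /=.
- exists ((n-1) * x - ((n-1) * s+t) * al2); apply: ident1 => //.
  by rewrite {1}hP1 ha; ring.
- exists ((n-1) * y - ((n-1) * s+t) * (-al1)); apply: ident1 => //.
  by rewrite {1}hP2 ha; ring.
Qed.

Lemma key (al1 al2 x y p1 p2 q1 q2 n : int) : al1 * x+al2 * y = 1 ->
  al1 * p1+al2 * p2 = n -> al1 * q1+al2 * q2 = n -> 2 <= n ->
  (p1 != q1) || (p2 != q2) ->
  exists lp lq : rat, [/\ 0 <= lp, 0 <= lq, lp + lq = (n-1)%:~R/n%:~R,
    exists z1 : int, lp * p1%:~R + lq * q1%:~R = z1%:~R &
    exists z2 : int, lp * p2%:~R + lq * q2%:~R = z2%:~R].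
Proof.
move=> H1 Hp Hq n2 pq.
set k := (q2-p2) * x - (q1-p1) * y.
have hQ1 : q1 = p1 - k * al2.
  apply/eqP; rewrite -subr_eq0; apply/eqP.
  transitivity (x * ((al1 * q1+al2 * q2) - (al1 * p1+al2 * p2)) - (q1-p1) * (al1 * x+al2 * y-1)).
    by rewrite /k; ring.
  by rewrite H1 Hp Hq !subrr !mulr0 subrr.
have hQ2 : q2 = p2 - k * (- al1).
  apply/eqP; rewrite -subr_eq0; apply/eqP.
  transitivity (y * ((al1 * q1+al2 * q2) - (al1 * p1+al2 * p2)) - (q2-p2) * (al1 * x+al2 * y-1)).
    by rewrite /k; ring.
  by rewrite H1 Hp Hq !subrr !mulr0 subrr.
case: (ltgtP k 0) => hk.
- have hk' : 0 < (p2-q2) * x - (p1-q1) * y.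
    have -> : (p2-q2) * x - (p1-q1) * y = - k by rewrite /k; ring.
    by rewrite oppr_gt0.
  have [lp [lq [h1 h2 h3 h4 h5]]] := key_pos _ _ _ _ _ _ _ _ _ H1 Hq Hp n2 hk'.
  exists lq, lp; split => //; first by rewrite addrC.
  + by case: h4 => z hz; exists z; rewrite addrC.
  + by case: h5 => z hz; exists z; rewrite addrC.
- exact: key_pos _ _ _ _ _ _ _ _ _ H1 Hp Hq n2 hk.
- by move: pq; rewrite hQ1 hQ2 hk !mul0r !subr0 !eqxx.
Qed.

Theorem mainTheorem6 (r : nat) (v : 'I_r.+1 -> 'rV[rat]_2) (ii : nat) :
  good_polytope v ->
  QGorenstein_index v ii ->
  (2 <= ii)%N ->
  (exists p q : 'rV[rat]_2,
      [/\ lattice_point p /\ lattice_point q, in_conv v p /\ in_conv v q,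
          p != 0, q != 0 & p != q]) ->
  ~ canonical v ii.
Proof.
move=> [_ [v0 _]] [ii0 [_ imin]] ii2 [p [q [[lp lq] [cp cq] p0 q0 pq]]] [al [hw hc]].
have hp := hc p lp cp p0; have hq := hc q lq cq q0.
have [p1 [p2 [ep1 ep2]]] := lat2 _ lp.
have [q1 [q2 [eq1 eq2]]] := lat2 _ lq.
set a1 := al 0 0; set a2 := al 0 1.
have hpr : (a1%:~R * p1%:~R + a2%:~R * p2%:~R : rat) = ii%:R by rewrite -ep1 -ep2 -hp pairing2.
have hqr : (a1%:~R * q1%:~R + a2%:~R * q2%:~R : rat) = ii%:R by rewrite -eq1 -eq2 -hq pairing2.
have Hp : a1 * p1 + a2 * p2 = ii%:Z.
  by apply: (@intr_inj rat); rewrite rmorphD !rmorphM /= hpr.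
have Hq : a1 * q1 + a2 * q2 = ii%:Z.
  by apply: (@intr_inj rat); rewrite rmorphD !rmorphM /= hqr.
set g := gcdz a1 a2.
set gn := gcdn `|a1| `|a2|.
have gdvd : (g %| ii%:Z)%Z.
  by rewrite -Hp; apply: rpredD; apply: dvdz_mulr; [exact: dvdz_gcdl | exact: dvdz_gcdr].
have gn_dvd : (gn %| ii)%N by exact: gdvd.
have gn0 : (0 < gn)%N.
  rewrite lt0n; apply/negP => /eqP e; move: gn_dvd; rewrite e dvd0n; lia.
have gnR : (gn%:R : rat) != 0 by rewrite pnatr_eq0 -lt0n.
have gn1 : gn = 1%N.
  have : (ii <= ii %/ gn)%N.
    apply: imin; first by rewrite divn_gt0 // dvdn_leq.
    exists (\row_j (divz (al 0 j) g)) => i i0.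
    have := hw i i0; rewrite !pairing2 !mxE => h.
    apply: (mulIf gnR).
    rewrite -natrM divnK // -h mulrDl -!mulrA ![_ * gn%:R]mulrC !mulrA.
    have -> : (gn%:R : rat) = g%:~R by [].
    by rewrite -!rmorphM /= !divzK // ?dvdz_gcdl ?dvdz_gcdr.
  move=> hle; case: (ltngtP gn 1) => h1 //; first lia.
  by have := ltn_Pdiv h1 ii0; lia.
have [x [y hxy]] := Bezoutz a1 a2.
have H1 : a1 * x + a2 * y = 1.
  by rewrite mulrC [a2 * _]mulrC hxy /gcdz -/gn gn1.
have ord2 : forall j : 'I_2, (j == 0) || (j == 1) by case=> [[|[|m]] hm].
have pqi : (p1 != q1) || (p2 != q2).
  rewrite -negb_and; apply/negP => /andP [/eqP e1 /eqP e2].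
  move/negP: pq; apply; apply/eqP/rowP => j.
  by case/orP: (ord2 j) => /eqP ->; rewrite ?ep1 ?eq1 ?ep2 ?eq2 ?e1 ?e2.
have n2 : 2 <= ii%:Z by lia.
have [lp' [lq' [h1 h2 h3 [z1 hz1] [z2 hz2]]]] := key _ _ _ _ _ _ _ _ _ H1 Hp Hq n2 pqi.
set z := lp' *: p + lq' *: q.
have hle : lp' + lq' <= 1.
  rewrite h3 ler_pdivrMr ?mul1r ?ler_int; [lia | by rewrite ltr0z; lia].
have hzc : in_conv v z := in_conv_comb _ _ _ _ _ _ v0 cp cq h1 h2 hle.
have hzl : lattice_point z.
  move=> j; apply/intrP; rewrite !mxE.
  case/orP: (ord2 j) => /eqP ->; [exists z1; rewrite ep1 eq1 | exists z2; rewrite ep2 eq2] => //.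
have hpz : pairing al z = (ii%:Z - 1)%:~R.
  rewrite pairing2 !mxE ep1 ep2 eq1 eq2.
  transitivity (lp' * (a1%:~R * p1%:~R + a2%:~R * p2%:~R) +
                lq' * (a1%:~R * q1%:~R + a2%:~R * q2%:~R) : rat); first by rewrite /a1 /a2; ring.
  rewrite hpr hqr -mulrDl h3.
  have iiR : ((ii%:Z)%:~R : rat) != 0 by rewrite intr_eq0; lia.
  move: iiR; rewrite !rmorphB /= -!pmulrn => iiR.
  by field.
have z0 : z != 0.
  apply/eqP => e; move: hpz; rewrite e pairing2 !mxE !mulr0 addr0 => /esym/eqP.
  rewrite intr_eq0; lia.
have e : ((ii%:Z - 1)%:~R : rat) = (ii%:Z)%:~R by rewrite -hpz; exact: hc z hzl hzc z0.
move/intr_inj: e; lia.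
Qed.
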